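(* Let $A$ be a set and $W$ a set of subsets of $A$ which contains $\emptyset$ and $A$ and is closed under pairwise unions and intersections. Suppose that no $C\subseteq A\times A$ all of whose rows $\{b\mid (a,b)\in C\}$ and columns $\{b\mid (b,a)\in C\}$ $(a\in A)$ belong to $W$ has infinitely many distinct rows (equivalently, infinitely many distinct columns). Then $(A,W)$ is a Pratt comonoid.
   Context: A Pratt comonoid is a pair $(A,W)$ where $A$ is a set and $W$ is a set of subsets of $A$ such that (i) $\emptyset\in W$ and $A\in W$; (ii) whenever $C\subseteq A\times A$ is such that for every $a\in A$ both the $a$-th row $\{b\mid (a,b)\in C\}$ and the $a$-th column $\{b\mid (b,a)\in C\}$ belong to $W$, the diagonal $\{b\mid (b,b)\in C\}$ also belongs to $W$. *)

(* Defs.v *)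
From mathcomp Require Import all_boot.
From mathcomp Require Import boolp classical_sets cardinality.
Set Implicit Arguments. Unset Strict Implicit. Unset Printing Implicit Defensive.
Local Open Scope classical_set_scope.

Definition prow {A : Type} (C : set (A * A)) (a : A) : set A := [set b | C (a, b)].
Definition pcol {A : Type} (C : set (A * A)) (a : A) : set A := [set b | C (b, a)].
Definition pdiag {A : Type} (C : set (A * A)) : set A := [set b | C (b, b)].

Definition rows_cols_in {A : Type} (W : set (set A)) (C : set (A * A)) : Prop :=
  forall a : A, W (prow C a) /\ W (pcol C a).

Definition pratt_comonoid {A : Type} (W : set (set A)) : Prop :=
  W set0 /\ W setT /\
  (forall C : set (A * A), rows_cols_in W C -> W (pdiag C)).

(* Main.v *)
Require Import Defs.
From mathcomp Require Import all_boot.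
From mathcomp Require Import boolp classical_sets cardinality.
Local Open Scope classical_set_scope.

Section Fin.
Variable A : Type.
Variable W : set (set A).
Hypothesis W0 : W set0.
Hypothesis WT : W setT.
Hypothesis WU : forall X Y : set A, W X -> W Y -> W (X `|` Y).
Hypothesis WI : forall X Y : set A, W X -> W Y -> W (X `&` Y).

Lemma seqU (s : seq (set A)) : (forall x, x \in s -> W x) ->
  W [set a | exists2 x, x \in s & x a].
Proof.
elim: s => [|y s IH] H.
  suff -> : [set a | exists2 x, x \in ([::] : seq (set A)) & x a] = set0 by [].
  by rewrite predeqE => a /=; split => // -[x].
have -> : [set a | exists2 x, x \in y :: s & x a] =
   y `|` [set a | exists2 x, x \in s & x a].
  rewrite predeqE => a /=; split.
    by move=> [x]; rewrite in_cons => /orP [/eqP -> | xs] xa; [left|right; exists x].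
  case=> [ya|[x xs xa]]; first by exists y => //; rewrite mem_head.
  by exists x => //; rewrite in_cons xs orbT.
apply: WU; first by apply: H; rewrite mem_head.
by apply: IH => x xs; apply: H; rewrite in_cons xs orbT.
Qed.

Lemma seqI (s : seq (set A)) : (forall x, x \in s -> W x) ->
  W [set a | forall x, x \in s -> x a].
Proof.
elim: s => [|y s IH] H.
  suff -> : [set a | forall x, x \in ([::] : seq (set A)) -> x a] = setT by [].
  by rewrite predeqE => a /=; split => // _ x.
have -> : [set a | forall x, x \in y :: s -> x a] =
   y `&` [set a | forall x, x \in s -> x a].
  rewrite predeqE => a /=; split.
    move=> Hx; split; first by apply: Hx; rewrite mem_head.
    by move=> x xs; apply: Hx; rewrite in_cons xs orbT.
  by move=> [ya Hs] x; rewrite in_cons => /orP [/eqP -> | xs] //; apply: Hs.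
apply: WI; first by apply: H; rewrite mem_head.
by apply: IH => x xs; apply: H; rewrite in_cons xs orbT.
Qed.

Lemma finU (F : set (set A)) : finite_set F -> F `<=` W ->
  W [set a | exists2 x, F x & x a].
Proof.
move=> /finite_fsetP [X ->] FW.
have := @seqU (finmap.enum_fset X) (fun x xs => FW x xs).
by congr W.
Qed.

Lemma finI (F : set (set A)) : finite_set F -> F `<=` W ->
  W [set a | forall x, F x -> x a].
Proof.
move=> /finite_fsetP [X ->] FW.
have := @seqI (finmap.enum_fset X) (fun x xs => FW x xs).
by congr W.
Qed.
End Fin.

Theorem corollary5p4 (A : Type) (W : set (set A)) :
  W set0 -> W setT ->
  (forall X Y : set A, W X -> W Y -> W (X `|` Y)) ->
  (forall X Y : set A, W X -> W Y -> W (X `&` Y)) ->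
  (forall C : set (A * A), rows_cols_in W C ->
     finite_set (range (prow C))) ->
  pratt_comonoid W.
Proof.
move=> W0 WT WU WI Hfin; split; first by []; split; first by [].
move=> C HC.
have finR := Hfin C HC.
pose CT : set (A * A) := [set p | C (p.2, p.1)].
have HCT : rows_cols_in W CT by move=> a; split; [exact: (HC a).2 | exact: (HC a).1].
have finK : finite_set (range (pcol C)) := Hfin CT HCT.
pose G (R : set A) := [set a | forall K, (pcol C @` R) K -> K a].
pose F := [set S | exists2 R, range (prow C) R & S = R `&` G R].
have -> : pdiag C = [set a | exists2 x, F x & x a].
  rewrite predeqE => a /=; split.
    move=> Caa; exists (prow C a `&` G (prow C a)).
      by exists (prow C a) => //; exists a.
    split; first exact: Caa.
    by move=> K [c Rc <-].
  move=> [S [R [b _ <-] ->]] [Ra HG].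
  have := HG (pcol C a) (ex_intro2 _ _ a Ra erefl).
  by [].
apply: finU => //.
  have -> : F = (fun R => R `&` G R) @` range (prow C).
    rewrite predeqE => S /=; split.
      by move=> [R HR ->]; exists R.
    by move=> [R HR <-]; exists R.
  exact: finite_image.
move=> S [R [b _ <-] ->].
apply: (WI); first exact: (HC b).1.
apply: finI => //.
  apply: (sub_finite_set _ finK) => K [c _ <-]; by exists c.
by move=> K [c _ <-]; exact: (HC c).2.
Qed.
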